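(* Let $n=2^s$, $q=2^r$ ($s,r$ positive integers). For $\beta\in\mathbb{F}_q$ let \[ \delta(n-1,q;\beta)=|\{(\alpha_1,\dots,\alpha_{n-1})\in(\mathbb{F}_q^* )^{n-1}:\alpha_1+\cdots+\alpha_{n-1}+\alpha_1^{-1}\cdots\alpha_{n-1}^{-1}=\beta\}|. \] Then $\delta(n-1,q;0)=q^{-1}\{(q-1)^{n-1}+1\}$, and for $\beta\in\mathbb{F}_q^*$, \[ \delta(n-1,q;\beta)=K_{n-2}(\lambda;\beta^{-1})+q^{-1}\{(q-1)^{n-1}+1\}. \]
   Context: $\mathbb{F}_q$ is the field with $q$ elements, $tr$ the absolute trace to $\mathbb{F}_2$, $\lambda(x)=(-1)^{tr(x)}$. For $m\ge1$ and $a\in\mathbb{F}_q^*$, $K_m(\lambda;a)=\sum_{\alpha_1,\dots,\alpha_m\in\mathbb{F}_q^*}\lambda(\alpha_1+\cdots+\alpha_m+a\alpha_1^{-1}\cdots\alpha_m^{-1})$; by convention $K_0(\lambda;a)=\lambda(a)$. *)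

(* Defs.v *)
From HB Require Import structures.
From mathcomp Require Import all_boot all_order all_algebra all_field.
Set Implicit Arguments. Unset Strict Implicit. Unset Printing Implicit Defensive.
Import Order.TTheory GRing.Theory Num.Theory.
Local Open Scope ring_scope.

Definition abs_trace (F : finFieldType) (x : F) : F :=
  \sum_(i < logn 2 #|F|) x ^+ (2 ^ i).

Definition lam (F : finFieldType) (x : F) : int :=
  if abs_trace x == 0 then 1 else -1.

Definition kloosterman (F : finFieldType) (m : nat) (a : F) : int :=
  if m is 0 then lam a else
  \sum_(f : {ffun 'I_m -> F} | [forall i, f i != 0])
     lam (\sum_(i < m) f i + a * \prod_(i < m) (f i)^-1).

Definition delta (F : finFieldType) (k : nat) (beta : F) : nat :=
  #|[set f : {ffun 'I_k -> F} | [forall i, f i != 0] &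
       \sum_(i < k) f i + \prod_(i < k) (f i)^-1 == beta]|.

(* Main.v *)
Require Import Defs.
From HB Require Import structures.
From mathcomp Require Import all_boot all_order all_algebra all_field.
From mathcomp Require Import zify ring.
Import Order.TTheory GRing.Theory Num.Theory.
Local Open Scope ring_scope.

Section Main.
Variable F : finFieldType.
Variable r : nat.
Hypothesis hr : (0 < r)%N.
Hypothesis hq : #|F| = (2 ^ r)%N.

Lemma ch2 : 2 \in [pchar F].
Proof. exact: card_finPcharP hq _. Qed.

Lemma sqD (x y : F) : (x + y) ^+ 2 = x ^+ 2 + y ^+ 2.
Proof. by rewrite sqrrD mulrn_pchar ?ch2 // addr0. Qed.

Lemma e2D n (x y : F) : (x + y) ^+ (2 ^ n) = x ^+ (2 ^ n) + y ^+ (2 ^ n).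
Proof. elim: n => [|n IH]; first by rewrite !expr1. by rewrite expnSr !exprM IH sqD. Qed.

Lemma e2sum n (I : finType) (P : pred I) (f : I -> F) :
  (\sum_(i | P i) f i) ^+ (2 ^ n) = \sum_(i | P i) f i ^+ (2 ^ n).
Proof.
apply: (big_morph (fun x : F => x ^+ (2 ^ n))) => [x y|]; first exact: e2D.
by rewrite expr0n expn_eq0.
Qed.

Lemma logq : logn 2 #|F| = r.
Proof. by rewrite hq pfactorK. Qed.

Lemma tr_sq (x : F) : abs_trace x ^+ 2 = abs_trace x.
Proof.
rewrite /abs_trace logq (e2sum 1).
under eq_bigr do rewrite -exprM -expnSr.
have [r' er] : exists r', r = r'.+1 by exists r.-1; rewrite prednK.
have hq' := hq; rewrite er in hq' *.
rewrite big_ord_recr big_ord_recl /= -hq' expf_card expr1 addrC.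
by congr (_ + _); apply: eq_bigr => i _.
Qed.

Lemma tr_sqx (x : F) : abs_trace (x ^+ 2) = abs_trace x.
Proof.
rewrite -[RHS]tr_sq /abs_trace (e2sum 1); apply: eq_bigr => i _.
by rewrite -!exprM mulnC.
Qed.

Lemma trD (x y : F) : abs_trace (x + y) = abs_trace x + abs_trace y.
Proof. by rewrite /abs_trace -big_split; apply: eq_bigr => i _; rewrite e2D. Qed.

Lemma tr01 (x : F) : abs_trace x = 0 \/ abs_trace x = 1.
Proof.
have := tr_sq x; rewrite expr2 => /eqP.
rewrite -subr_eq0 -[X in _ - X]mulr1 -mulrBr mulf_eq0 subr_eq0.
by case/orP => /eqP ->; [left|right].
Qed.

Lemma tr0 : abs_trace (0 : F) = 0.
Proof. by rewrite /abs_trace big1 // => i _; rewrite expr0n expn_eq0. Qed.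

Lemma lam0 : lam (0 : F) = 1.
Proof. by rewrite /lam tr0 eqxx. Qed.

Lemma lamD (x y : F) : lam (x + y) = lam x * lam y.
Proof.
rewrite /lam trD; case: (tr01 x) => ->; case: (tr01 y) => ->;
  rewrite ?addr0 ?add0r ?eqxx ?oner_eq0 ?mulr1 ?mulN1r ?opprK //.
by rewrite addrr_pchar2 ?ch2 // eqxx.
Qed.

Lemma lam_sq (x : F) : lam (x ^+ 2) = lam x.
Proof. by rewrite /lam tr_sqx. Qed.

Lemma lam_e2 n (x : F) : lam (x ^+ (2 ^ n)) = lam x.
Proof. elim: n => [|n IH]; first by rewrite expr1. by rewrite expnSr exprM lam_sq. Qed.

Lemma lam_sum (I : finType) (P : pred I) (f : I -> F) :
  lam (\sum_(i | P i) f i) = \prod_(i | P i) lam (f i).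
Proof. by apply: (big_morph (@lam F)); [exact: lamD | exact: lam0]. Qed.

Lemma tr_nontriv : exists a : F, abs_trace a != 0.
Proof.
apply/existsP; apply: contraT; rewrite negb_exists => /forallP /= H.
pose P : {poly F} := \sum_(i < r) 'X^(2 ^ i).
have rP : all (root P) (enum F).
  apply/allP => x _; rewrite /root horner_sum.
  have /eqP e := negbNE (H x).
  under eq_bigr do rewrite hornerXn.
  by apply/eqP; rewrite -[RHS]e /abs_trace logq.
have P0 : P != 0.
  apply/eqP => /(congr1 (fun p : {poly F} => p`_(2 ^ r.-1))); rewrite coef0 coef_sum.
  have hr1 : (r.-1 < r)%N by rewrite prednK.
  rewrite (bigD1 (Ordinal hr1)) //= coefXn eqxx big1 ?addr0 ?oner_eq0 //.
    by move/eqP; rewrite oner_eq0.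
  move=> i hi; rewrite coefXn eqn_exp2l //.
  case: eqP => // e; case/eqP: hi; exact: val_inj.
have := max_poly_roots P0 rP (enum_uniq _).
rewrite -cardE hq => /leq_trans/(_ (size_sum _ _ _)) => h.
have : (\max_(i < r) size ('X^(2 ^ i) : {poly F}) <= (2 ^ r.-1).+1)%N.
  apply/bigmax_leqP => i _; rewrite size_polyXn ltnS leq_exp2l //.
  by rewrite -ltnS prednK.
move/(leq_trans h); rewrite ltnS.
have [r' er] : exists r', r = r'.+1 by exists r.-1; rewrite prednK.
rewrite er /= expnS => H'; have := expn_gt0 2 r'; lia.
Qed.


Lemma lam_a : exists a : F, lam a = -1.
Proof. by have [a ha] := tr_nontriv; exists a; rewrite /lam (negbTE ha). Qed.

Lemma sum_lam : \sum_(x : F) lam x = 0.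
Proof.
have [a la] := lam_a.
have e : \sum_(x : F) lam x = - \sum_(x : F) lam x.
  rewrite [LHS](reindex_inj (addIr a)) /=.
  under eq_bigr do rewrite lamD la mulrN1.
  by rewrite sumrN.
lia.
Qed.

Lemma sum_lamM (z : F) :
  \sum_(t : F) lam (t * z) = if z == 0 then (#|F|)%:R else 0.
Proof.
case: eqP => [->|/eqP z0].
  under eq_bigr do rewrite mulr0 lam0.
  by rewrite sumr_const.
rewrite (reindex_inj (mulIf (invr_neq0 z0))) /=.
under eq_bigr do rewrite mulfVK //.
exact: sum_lam.
Qed.

Lemma sum_lamM' (z : F) :
  \sum_(t | t != 0) lam (t * z) = (if z == 0 then (#|F|)%:R else 0) - 1.
Proof. by rewrite -sum_lamM [in RHS](bigD1 0) //= mul0r lam0 [1 + _]addrC addrK. Qed.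

Lemma sum_lam_nz : \sum_(x : F | x != 0) lam x = -1.
Proof.
have := sum_lamM' (1 : F); rewrite oner_eq0 add0r => <-.
by apply: eq_bigr => x _; rewrite mulr1.
Qed.

Lemma sum_prod k (G : F -> int) :
  \sum_(f : {ffun 'I_k -> F} | [forall i, f i != 0]) \prod_i G (f i)
    = (\sum_(a | a != 0) G a) ^+ k.
Proof.
rewrite -[in RHS](card_ord k) -prodr_const.
rewrite (bigA_distr_big _ (fun (i : 'I_k) a => G a)).
apply: eq_bigl => f; apply/forallP/ffun_onP => H i; exact: H.
Qed.


Lemma delta_sum k (b : F) : ((delta k b)%:R : int) =
  \sum_(f : {ffun 'I_k -> F} | [forall i, f i != 0])
     (if \sum_i f i + \prod_i (f i)^-1 == b then 1 else 0).
Proof.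
rewrite /delta -sumr_const big_mkcond [RHS]big_mkcond /=; apply: eq_bigr => f _.
rewrite inE; set A := [forall _, _]; set B := (_ == b).
by case: A; case: B.
Qed.

Lemma orth k (b : F) : (#|F|%:R : int) * (delta k b)%:R =
  \sum_(t : F) \sum_(f : {ffun 'I_k -> F} | [forall i, f i != 0])
     lam (t * (\sum_i f i + \prod_i (f i)^-1 + b)).
Proof.
rewrite delta_sum mulr_sumr [RHS]exchange_big /=; apply: eq_bigr => f _.
rewrite sum_lamM.
have -> : (\sum_i f i + \prod_i (f i)^-1 + b == 0) = (\sum_i f i + \prod_i (f i)^-1 == b).
  by rewrite addr_eq0 oppr_pchar2 ?ch2.
by case: ifP; rewrite ?mulr1 ?mulr0.
Qed.

Lemma frob_inj s : injective (fun x : F => x ^+ (2 ^ s)).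
Proof.
move=> x y /= e.
have : (x + y) ^+ (2 ^ s) = 0 by rewrite e2D e addrr_pchar2 ?ch2.
move/eqP; rewrite expf_eq0 expn_gt0 /= addr_eq0 oppr_pchar2 ?ch2.
by move/eqP.
by [].
Qed.


Lemma inner s k (t b : F) (hk : k.+1 = (2 ^ s)%N) (t0 : t != 0) :
  \sum_(f : {ffun 'I_k -> F} | [forall i, f i != 0])
     lam (t * (\sum_i f i + \prod_i (f i)^-1 + b))
  = \sum_(f : {ffun 'I_k -> F} | [forall i, f i != 0])
     lam (\sum_i f i) * lam (t * (\prod_i (f i)^-1 + b)).
Proof.
pose h := fun d : {ffun 'I_k -> F} => [ffun i => d i ^+ (2 ^ s) / t].
have hinj : injective h.
  move=> d1 d2 /ffunP e; apply/ffunP => i; have := e i; rewrite !ffunE.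
  by move/(mulIf (invr_neq0 t0)); apply: frob_inj.
rewrite (reindex_inj hinj) /=.
apply: eq_big => [d|d _].
  apply/forallP/forallP => H i.
    by move: (H i); rewrite ffunE mulf_eq0 invr_eq0 (negbTE t0) orbF expf_eq0 expn_gt0.
  by rewrite ffunE mulf_eq0 invr_eq0 (negbTE t0) orbF expf_eq0 expn_gt0 /= (negbTE (H i)).
under eq_bigr do rewrite ffunE.
under [X in lam (t * (_ + X + b))]eq_bigr do rewrite ffunE invf_div.
rewrite -mulr_suml -e2sum big_split /= prodr_const card_ord.
under [X in lam (t * (_ + _ * X + b))]eq_bigr do rewrite -exprVn.
rewrite prodrXl.
set A := \sum_i d i; set B := \prod_i (d i)^-1.
have -> : t * (A ^+ (2 ^ s) / t + t ^+ k * B ^+ (2 ^ s) + b)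
    = A ^+ (2 ^ s) + (t * B) ^+ (2 ^ s) + t * b.
  rewrite -hk exprMn (exprS t).
  set X := A ^+ k.+1; set Y := B ^+ k.+1; set T := t ^+ k.
  clearbody X Y T; field.
  exact: t0.
by rewrite !lamD !lam_e2 mulrDr lamD mulrA.
Qed.


Lemma key s k (b : F) : (0 < s)%N -> k.+1 = (2 ^ s)%N ->
  (#|F|%:R : int) * (delta k b)%:R
  = (#|F|%:R - 1) ^+ k + 1 + #|F|%:R *
    \sum_(f : {ffun 'I_k -> F} | [forall i, f i != 0])
       (if \prod_i (f i)^-1 == b then lam (\sum_i f i) else 0).
Proof.
move=> s0 hk.
have E0 : \sum_(f : {ffun 'I_k -> F} | [forall i, f i != 0])
     lam (0 * (\sum_i f i + \prod_i (f i)^-1 + b)) = (#|F|%:R - 1) ^+ k.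
  transitivity (\sum_(f : {ffun 'I_k -> F} | [forall i, f i != 0]) \prod_(i < k) (1:int)).
    by apply: eq_bigr => f _; rewrite mul0r lam0 big1_eq.
  rewrite (sum_prod k (fun _ => 1)); congr (_ ^+ _).
  have := sum_lamM' 0; rewrite eqxx => <-.
  by apply: eq_bigr => a _; rewrite mulr0 lam0.
have ok : odd k.
  have : odd k.+1 = false by rewrite hk oddX; case: (s) s0.
  by move/negbFE.
have E1 : \sum_(f : {ffun 'I_k -> F} | [forall i, f i != 0]) lam (\sum_i f i) = -1.
  under eq_bigr do rewrite lam_sum.
  by rewrite sum_prod sum_lam_nz -signr_odd ok expr1.
rewrite orth (bigD1 0) //= E0.
under eq_bigr => t t0 do rewrite (@inner s k t b hk t0).
rewrite exchange_big /=.
under eq_bigr do rewrite -mulr_sumr sum_lamM' mulrBr mulr1.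
rewrite sumrB E1 mulr_sumr.
have -> : \sum_(f : {ffun 'I_k -> F} | [forall i, f i != 0])
     lam (\sum_i f i) * (if \prod_i (f i)^-1 + b == 0 then #|F|%:R else 0)
   = \sum_(f : {ffun 'I_k -> F} | [forall i, f i != 0])
     #|F|%:R * (if \prod_i (f i)^-1 == b then lam (\sum_i f i) else 0).
  apply: eq_bigr => f _.
  rewrite addr_eq0 oppr_pchar2 ?ch2 //.
  by case: ifP; rewrite ?mulr0 // mulrC.
set X := (_ ^+ k); set Y := \sum_(_ | _) _.
by rewrite opprK [Y + 1]addrC addrA.
Qed.


Lemma T0 k : \sum_(f : {ffun 'I_k -> F} | [forall i, f i != 0])
       (if \prod_i (f i)^-1 == 0 then lam (\sum_i f i) else 0) = 0.
Proof.
apply: big1 => f /forallP H; rewrite ifN //.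
by apply/prodf_neq0 => i _; rewrite invr_eq0 H.
Qed.

Lemma lw m (j : 'I_m) : widen_ord (leqnSn m) j = lift ord_max j.
Proof. by apply: val_inj; rewrite [RHS]lift_max. Qed.

Lemma Tb m (b : F) : b != 0 ->
  \sum_(f : {ffun 'I_m.+1 -> F} | [forall i, f i != 0])
       (if \prod_i (f i)^-1 == b then lam (\sum_i f i) else 0)
  = \sum_(g : {ffun 'I_m -> F} | [forall i, g i != 0])
       lam (\sum_i g i + b^-1 * \prod_i (g i)^-1).
Proof.
move=> b0; rewrite -big_mkcondr.
pose h : {ffun 'I_m -> F} -> {ffun 'I_m.+1 -> F} := fun g =>
  [ffun i => if unlift ord_max i is Some j then g j else b^-1 * \prod_j (g j)^-1].
pose h' : {ffun 'I_m.+1 -> F} -> {ffun 'I_m -> F} := fun f => [ffun j => f (lift ord_max j)].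
have hgw g j : h g (lift ord_max j) = g j by rewrite ffunE liftK.
have hgm g : h g ord_max = b^-1 * \prod_j (g j)^-1 by rewrite ffunE unlift_none.
have hh' g : h' (h g) = g by apply/ffunP => j; rewrite ffunE hgw.
rewrite (reindex_onto h h') /=; last first.
  move=> f /andP[/forallP H /eqP Hp]; apply/ffunP => i.
  case: (unliftP ord_max i) => [j ->|->]; first by rewrite hgw ffunE.
  rewrite hgm; under eq_bigr do rewrite ffunE.
  move: Hp; rewrite big_ord_recr /=.
  under eq_bigr do rewrite lw.
  have P0 : \prod_(j < m) (f (lift ord_max j))^-1 != 0.
    by apply/prodf_neq0 => j _; rewrite invr_eq0 H.
  move=> <-; move: (H ord_max) P0.
  set P := \prod_(j < m) _; set x := f _ => x0 P0.
  by field; rewrite x0 P0.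
apply: eq_big => [g|g _].
  rewrite hh' eqxx andbT.
  apply/andP/forallP => [[/forallP H _] j|H].
    by rewrite -hgw H.
  have P0 : \prod_j (g j)^-1 != 0.
    by apply/prodf_neq0 => j _; rewrite invr_eq0 H.
  split.
    apply/forallP => i; case: (unliftP ord_max i) => [j ->|->].
      by rewrite hgw H.
    by rewrite hgm mulf_neq0 // invr_eq0.
  rewrite big_ord_recr /=.
  under eq_bigr do rewrite lw hgw.
  rewrite hgm; move: P0; set P := \prod_j _ => P0.
  by apply/eqP; field; rewrite b0 P0.
rewrite big_ord_recr /=.
under eq_bigr do rewrite lw hgw.
by rewrite hgm.
Qed.

Lemma kl m (b : F) :
  \sum_(g : {ffun 'I_m -> F} | [forall i, g i != 0])
       lam (\sum_i g i + b^-1 * \prod_i (g i)^-1) = kloosterman m b^-1.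
Proof.
case: m => [|m] //=.
under eq_bigr do rewrite !big_ord0 add0r mulr1.
rewrite (eq_bigl xpredT); last by move=> g; apply/forallP => -[].
by rewrite sumr_const card_ffun card_ord expn0.
Qed.

End Main.
Lemma conv (q d k : nat) (T : int) : (0 < q)%N ->
  (q%:R : int) * d%:R = (q%:R - 1) ^+ k + 1 + q%:R * T ->
  (d%:R : rat) = T%:~R + ((q.-1 ^ k).+1)%:R / q%:R.
Proof.
case: q => // p _ /(congr1 (fun z : int => z%:~R : rat)).
rewrite !rmorphD !rmorphM !rmorphXn !rmorphB /= !rmorph_nat rmorph1.
move=> H.
have e : (p.+1%:R : rat) - 1 = p%:R by rewrite -natr1 addrK.
rewrite e in H.
have p0 : (p.+1%:R : rat) != 0 by rewrite pnatr_eq0.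
have -> : (d%:R : rat) = (p.+1%:R * d%:R) / p.+1%:R by rewrite mulrC mulKf.
rewrite H -[(p ^ k).+1%:R]natr1 natrX.
set a := (_ ^+ k); set t := (T%:~R : rat).
by field; rewrite nat1r.
Qed.

Theorem proposition11 (s r : nat) (F : finFieldType) :
  (0 < s)%N -> (0 < r)%N -> #|F| = (2 ^ r)%N ->
  ((delta (2 ^ s).-1 (0 : F))%:R : rat)
     = (((2 ^ r).-1 ^ (2 ^ s).-1).+1)%:R / (2 ^ r)%:R /\
  (forall beta : F, beta != 0 ->
     ((delta (2 ^ s).-1 beta)%:R : rat)
       = (kloosterman (2 ^ s - 2) beta^-1)%:~R
         + (((2 ^ r).-1 ^ (2 ^ s).-1).+1)%:R / (2 ^ r)%:R).
Proof.
move=> s0 r0 hq.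
have hm : (2 <= 2 ^ s)%N by rewrite -{1}(expn1 2) leq_exp2l.
set m := (2 ^ s - 2)%N.
have hk : m.+1.+1 = (2 ^ s)%N by rewrite /m; lia.
have hk' : (2 ^ s).-1 = m.+1 by rewrite -hk.
have q0 : (0 < #|F|)%N by rewrite hq expn_gt0.
rewrite hk' -hq.
split.
  have := @key F r r0 hq s m.+1 0 s0 hk.
  rewrite T0 => /(conv _ _ _ _ q0) ->.
  by rewrite rmorph0 add0r.
move=> b b0.
have := @key F r r0 hq s m.+1 b s0 hk.
by rewrite Tb // kl => /(conv _ _ _ _ q0).
Qed.
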